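(* Let $V$ be a finite nonempty set, $c\in\mathbb{R}^{P_V}$, $U,U'\subseteq V$ disjoint, $U''=V\setminus(U\cup U')$, $i\in U$, $j\in U'$, and $\hat x$ a maximally specific partial function on $P_V$. Let $P'_{01}=\{pq\in U\times U'\mid \hat x_{pi}\neq 0\neq \hat x_{jq}\}\setminus\hat x^{-1}(1)$ and $P'_{10}=\big((U''\times U)\cup(U'\times U)\cup(U'\times U'')\big)\setminus\hat x^{-1}(0)$. If $\gamma^{ij|1}(X_V[\hat x])\subseteq X_V[\hat x]$ and $$c_{ij}^+\ \ge\ \sum_{pq\in P'_{01}}c_{pq}^- + \sum_{pq\in P'_{10}}c_{pq}^+,$$ then there is a maximizer $x^*$ of $\varphi_c$ over $X_V[\hat x]$ with $x^*_{ij}=1$.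
   Context: $P_V=\{pq\in V^2\mid p\neq q\}$; $X_V$ is the set of $x\in\{0,1\}^{P_V}$ with $x_{pq}+x_{qr}-x_{pr}\le 1$ for all pairwise distinct $p,q,r\in V$; $\varphi_c(x)=\sum_{pq\in P_V}c_{pq}x_{pq}$. A partial function $\tilde x$ is a map from $\operatorname{dom}(\tilde x)\subseteq P_V$ to $\{0,1\}$, $\tilde x^{-1}(b)$ the pairs mapped to $b$; convention $\tilde x_{aa}=1$ and $x_{aa}=1$ for all $a\in V$, $x\in X_V$. $X_V[\tilde x]=\{x\in X_V\mid x_{pq}=\tilde x_{pq}\ \forall pq\in\operatorname{dom}(\tilde x)\}$. A pair $pq$ is decided if $x_{pq}=x'_{pq}$ for all $x,x'\in X_V[\tilde x]$; $\tilde x$ is maximally specific if $X_V[\tilde x]\ne\emptyset$ and the decided pairs are exactly $\operatorname{dom}(\tilde x)$. For $A,B\subseteq V$ disjoint with $A\cup B=V$, $\sigma_{A\times B}\colon X_V\to X_V$ sets $\sigma_{A\times B}(x)_{pq}=0$ if $pq\in A\times B$ and $=x_{pq}$ otherwise. For $ij\in P_V$, $\sigma_{ij}\colon X_V\to X_V$ sets $\sigma_{ij}(x)_{pq}=1$ if $x_{pi}=x_{jq}=1$ and $=x_{pq}$ otherwise. Let $\gamma=\sigma_{ij}\circ\sigma_{(V\setminus U)\times U}\circ\sigma_{U'\times(V\setminus U')}$ and $\gamma^{ij|1}\colon X_V[\hat x]\to X_V$ with $\gamma^{ij|1}(x)=x$ if $x_{ij}=1$ and $\gamma^{ij|1}(x)=\gamma(x)$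 if $x_{ij}=0$. For real $a$: $a^+=\max(a,0)$, $a^-=\max(-a,0)$. *)

(* Defs.v *)
From HB Require Import structures.
From mathcomp Require Import all_boot all_order all_algebra.
Set Implicit Arguments. Unset Strict Implicit. Unset Printing Implicit Defensive.
Import Order.TTheory GRing.Theory Num.Theory.
Local Open Scope ring_scope.

Section Defs.
Variable V : finType.

(* A (total) labeling x in {0,1}^{P_V} is encoded as a finite function on
   V*V whose diagonal is fixed to true (convention x_aa = 1).              *)
Definition in_X (x : {ffun V * V -> bool}) : Prop :=
  (forall a, x (a, a) = true) /\
  (forall p q r, p != q -> q != r -> p != r ->
     (x (p, q) + x (q, r) <= 1 + x (p, r))%N).

(* A partial function: None = undefined. Convention: value on the diagonal is 1. *)
Definition pval (xh : V * V -> option bool) (p q : V) : option bool :=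
  if p == q then Some true else xh (p, q).

Definition in_Xh (xh : V * V -> option bool) (x : {ffun V * V -> bool}) : Prop :=
  in_X x /\ forall p q, p != q -> forall b, xh (p, q) = Some b -> x (p, q) = b.

Definition decided (xh : V * V -> option bool) (p q : V) : Prop :=
  forall x x', in_Xh xh x -> in_Xh xh x' -> x (p, q) = x' (p, q).

Definition maximally_specific (xh : V * V -> option bool) : Prop :=
  (exists x, in_Xh xh x) /\
  (forall p q, (p != q /\ decided xh p q) <-> xh (p, q) <> None).

Definition phi {R : realFieldType} (c : V * V -> R) (x : {ffun V * V -> bool}) : R :=
  \sum_(pq : V * V | pq.1 != pq.2) c pq * (x pq)%:R.

Definition sigma_prod (A B : {set V}) (x : {ffun V * V -> bool}) : {ffun V * V -> bool} :=
  [ffun pq => if pq.1 == pq.2 then true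
              else if (pq.1 \in A) && (pq.2 \in B) then false else x pq].

Definition sigma_pair (i j : V) (x : {ffun V * V -> bool}) : {ffun V * V -> bool} :=
  [ffun pq => if pq.1 == pq.2 then true
              else if ((pq.1 == i) || x (pq.1, i)) && ((j == pq.2) || x (j, pq.2))
                   then true else x pq].

Definition gamma (U U' : {set V}) (i j : V) (x : {ffun V * V -> bool}) :=
  sigma_pair i j (sigma_prod (~: U) U (sigma_prod U' (~: U') x)).

Definition gamma_ij1 (U U' : {set V}) (i j : V) (x : {ffun V * V -> bool}) :=
  if x (i, j) then x else gamma U U' i j x.

Definition pospart {R : realFieldType} (a : R) : R := Num.max a 0.
Definition negpart {R : realFieldType} (a : R) : R := Num.max (- a) 0.

Definition P01 (xh : V * V -> option bool) (U U' : {set V}) (i j : V) (pq : V * V) : bool :=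
  [&& pq.1 \in U, pq.2 \in U', pval xh pq.1 i != Some false,
      pval xh j pq.2 != Some false & xh pq != Some true].

Definition P10 (xh : V * V -> option bool) (U U' : {set V}) (pq : V * V) : bool :=
  let U'' := ~: (U :|: U') in
  [|| (pq.1 \in U'') && (pq.2 \in U),
      (pq.1 \in U') && (pq.2 \in U) | (pq.1 \in U') && (pq.2 \in U'')]
  && (xh pq != Some false).

End Defs.

(* Main.v *)
Require Import Defs.
From HB Require Import structures.
From mathcomp Require Import all_boot all_order all_algebra.
From mathcomp Require Import lra.
From Stdlib Require Import ClassicalEpsilon.
Import Order.TTheory GRing.Theory Num.Theory.
Local Open Scope ring_scope.

Section Aux.
Variable R : realFieldType.

Lemma pos_ge0 (a : R) : 0 <= pospart a.
Proof. rewrite /pospart /Num.max /Order.max /=; case: ifP => h1; move: h1; lra. Qed.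
Lemma neg_ge0 (a : R) : 0 <= negpart a.
Proof. rewrite /negpart /Num.max /Order.max /=; case: ifP => h1; move: h1; lra. Qed.
Lemma pos_ge (a : R) : a <= pospart a.
Proof. rewrite /pospart /Num.max /Order.max /=; case: ifP => h1; move: h1; lra. Qed.
Lemma posneg (a : R) : pospart a - negpart a = a.
Proof.
rewrite /pospart /negpart /Num.max /Order.max /=.
case: ifP => h1; case: ifP => h2; move: h1 h2; lra.
Qed.
End Aux.

Section Gam.
Variables (V : finType) (U U' : {set V}) (i j : V).
Hypothesis hUU' : [disjoint U & U'].
Hypothesis hi : i \in U.
Hypothesis hj : j \in U'.

Definition y2 (x : {ffun V * V -> bool}) := sigma_prod (~: U) U (sigma_prod U' (~: U') x).

Lemma y2E x a b : a != b ->
  y2 x (a, b) = if (a \notin U) && (b \in U) then false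
                else if (a \in U') && (b \notin U') then false else x (a, b).
Proof. by move=> hab; rewrite /y2 /sigma_prod !ffunE /= (negbTE hab) !inE. Qed.

Lemma gammaE x p q : p != q ->
  gamma U U' i j x (p, q) =
  if ((p == i) || y2 x (p, i)) && ((j == q) || y2 x (j, q)) then true else y2 x (p, q).
Proof. by move=> hpq; rewrite /gamma /sigma_pair ffunE /= (negbTE hpq). Qed.

Lemma y2_le x a b : a != b -> y2 x (a, b) -> x (a, b).
Proof. by move=> hab; rewrite y2E //; do 2 case: ifP => //. Qed.


Lemma lemA x p q : p != q -> gamma U U' i j x (p, q) = true -> x (p, q) = false ->
  [/\ p \in U, q \in U', (p == i) || x (p, i) & (j == q) || x (j, q)].
Proof.
move=> hpq; rewrite gammaE //; case: ifP => [/andP[H1 H2] _ _ | _ h1 h2]; last first.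
  by move: (y2_le x p q hpq); rewrite h1 h2 => /(_ isT).
have iU' := disjointFr hUU' hi; have jU := disjointFl hUU' hj.
have [hpU hpi] : p \in U /\ (p == i) || x (p, i).
  case: eqP H1 => [-> | /eqP hpi] /=; first by rewrite hi.
  rewrite y2E // hi iU' andbT /=.
  case: ifP => // /negbFE pU; rewrite (disjointFr hUU' pU) /= => h.
  by split.
have [hqU' hqj] : q \in U' /\ (j == q) || x (j, q).
  case: eqP H2 => [<- | /eqP hjq] /=; first by split; rewrite ?eqxx.
  rewrite y2E // hj jU /=.
  by case: ifP => // _; case: ifP => // /negbFE qU' h; split.
by split.
Qed.

Lemma lemB x p q : p != q -> gamma U U' i j x (p, q) = false -> x (p, q) = true ->
  ((p \in U') && (q \notin U')) || ((p \notin U) && (q \in U)).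
Proof.
move=> hpq; rewrite gammaE //; case: ifP => // _.
rewrite y2E //; case: ifP => [hA|_]; first by move=> _ _; apply/orP; right.
by case: ifP => [hB|_ ->] // _ _; apply/orP; left.
Qed.

End Gam.

Theorem proposition6p6 (R : realFieldType) (V : finType) (hV : (0 < #|V|)%N)
    (c : V * V -> R) (U U' : {set V}) (hUU' : [disjoint U & U'])
    (i j : V) (hi : i \in U) (hj : j \in U')
    (xh : V * V -> option bool) (hxh : maximally_specific xh)
    (hgamma : forall x, in_Xh xh x -> in_Xh xh (gamma_ij1 U U' i j x))
    (hc : \sum_(pq : V * V | P01 xh U U' i j pq) negpart (c pq)
          + \sum_(pq : V * V | P10 xh U U' pq) pospart (c pq)
          <= pospart (c (i, j))) :
  exists xs : {ffun V * V -> bool},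
    [/\ in_Xh xh xs,
        (forall x, in_Xh xh x -> phi c x <= phi c xs) &
        xs (i, j) = true].
Proof.
have iU' := disjointFr hUU' hi; have jU := disjointFl hUU' hj.
have hij : i != j by apply/eqP => e; move: iU'; rewrite e hj.
pose Pb x := if excluded_middle_informative (in_Xh xh x) then true else false.
have PbP x : Pb x = true <-> in_Xh xh x.
  by rewrite /Pb; case: excluded_middle_informative.
case: hxh => [[x0 hx0] _].
have Px0 : Pb x0 by apply/PbP.
case: (@arg_maxP _ _ _ x0 Pb (phi c) Px0) => xm /PbP hxm hmax.
case hxmij: (xm (i, j)).
  by exists xm; split => // x /PbP hx; apply: hmax.
pose xs := gamma U U' i j xm.
have hxs : in_Xh xh xs by move: (hgamma _ hxm); rewrite /gamma_ij1 hxmij.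
have xsij : xs (i, j) = true by rewrite /xs gammaE // !eqxx.
exists xs; split => // x hx.
apply: (le_trans (hmax x _)); first by apply/PbP.
rewrite -subr_ge0.
have -> : phi c xs - phi c xm =
   \sum_(pq : V * V | pq.1 != pq.2) c pq * ((xs pq)%:R - (xm pq)%:R).
  by rewrite /phi -sumrB; apply: eq_bigr => pq _; rewrite mulrBr.
pose f pq := (if pq == (i, j) then pospart (c pq) else 0)
   - (if P01 xh U U' i j pq then negpart (c pq) else 0)
   - (if P10 xh U U' pq then pospart (c pq) else 0).
have sum_if (P : pred (V * V)) (g : V * V -> R) : (forall pq, 0 <= g pq) ->
    \sum_(pq : V * V | pq.1 != pq.2) (if P pq then g pq else 0)
    <= \sum_(pq | P pq) g pq.
  move=> g0; rewrite [X in _ <= X]big_mkcond /= [X in X <= _]big_mkcond /=.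
  apply: ler_sum => pq _.
  case: (pq.1 != pq.2); first exact: lexx.
  by case: ifP => // _; exact: g0.
apply: (le_trans (y := \sum_(pq : V * V | pq.1 != pq.2) f pq)).
  rewrite /f !sumrB.
  rewrite (bigD1 (i, j)) //= eqxx big1 ?addr0; last first.
    by move=> pq /andP[_ /negbTE ->].
  have h1 := sum_if (P01 xh U U' i j) (fun pq => negpart (c pq)) (fun _ => neg_ge0 _ _).
  have h2 := sum_if (P10 xh U U') (fun pq => pospart (c pq)) (fun _ => pos_ge0 _ _).
  lra.
apply: ler_sum => -[p q] /= hpq.
have hP01 : xs (p, q) = true -> xm (p, q) = false -> P01 xh U U' i j (p, q).
  move=> a b; have [pU qU' hpi hjq] := @lemA V U U' i j hUU' hi hj xm p q hpq a b.
  case: hxm => _ hc'.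
  rewrite /P01 /= pU qU' /pval.
  rewrite /=; apply/and3P; split.
  - have [//|npi] := eqVneq p i; move: hpi; rewrite (negbTE npi) /= => xpi.
    case e: (xh (p, i)) => [[]|] //.
    by move: (hc' _ _ npi _ e); rewrite xpi.
  - have [//|njq] := eqVneq j q; move: hjq; rewrite (negbTE njq) /= => xjq.
    case e: (xh (j, q)) => [[]|] //.
    by move: (hc' _ _ njq _ e); rewrite xjq.
  - case e: (xh (p, q)) => [[]|] //.
    by move: (hc' _ _ hpq _ e); rewrite b.
have hP10 : xs (p, q) = false -> xm (p, q) = true -> P10 xh U U' (p, q).
  move=> a b; have h := @lemB V U U' i j xm p q hpq a b.
  case: hxm => _ hc'.
  rewrite /P10 /=; apply/andP; split; last first.
    case e: (xh (p, q)) => [[]|] //.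
    by move: (hc' _ _ hpq _ e); rewrite b.
  rewrite !inE; move: h.
  case: (p \in U); case: (p \in U'); case: (q \in U); case: (q \in U') => //=.
  all: try by [].
  all: idtac.
have hpos := @pos_ge0 R (c (p, q)); have hneg := @neg_ge0 R (c (p, q)).
have hpg := @pos_ge R (c (p, q)); have hpn := @posneg R (c (p, q)).
rewrite /f.
case exs: (xs (p, q)); case exm: (xm (p, q)).
- have -> : (p, q) == (i, j) = false.
    by apply/negbTE/eqP => -[e1 e2]; move: exm; rewrite e1 e2 hxmij.
  rewrite subrr mulr0.
  case: (P01 _ _ _ _ _ _); case: (P10 _ _ _ _); lra.
- rewrite (hP01 exs exm) /= subr0 mulr1.
  case: eqP => [[e1 e2]|_]; [subst p q|]; case: (P10 _ _ _ _); lra.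
- have -> : (p, q) == (i, j) = false.
    by apply/negbTE/eqP => -[e1 e2]; move: exs; rewrite /xs e1 e2 xsij.
  rewrite (hP10 exs exm) /=.
  case: (P01 _ _ _ _ _ _); lra.
- have -> : (p, q) == (i, j) = false.
    by apply/negbTE/eqP => -[e1 e2]; move: exs; rewrite /xs e1 e2 xsij.
  rewrite subrr mulr0.
  case: (P01 _ _ _ _ _ _); case: (P10 _ _ _ _); lra.
Qed.
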